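(* Let $A$ be a nonempty finite set of positive integers. The number of nonempty subsets of $A$ whose elements are pairwise co-prime equals \[ \# \left\{B\subseteq A:\ B\neq\emptyset\ \text{and}\ 2|B| -1 = \left( 1 + 4 \sum_{d=1}^{\sup B} \mu(d)\, v(B,d)\, (v(B,d)-1) \right)^{1/2} \right\}. \]
   Context: For a nonempty finite set $B$ of positive integers, $\sup B$ is its largest element and, for a positive integer $d$, $v(B,d)$ is the number of multiples of $d$ in $B$. $\mu$ is the Möbius function. A set is said to have pairwise co-prime elements if every $2$-element subset has gcd $1$ (vacuously true for singletons). *)

(* Defs.v *)
From HB Require Import structures.
From mathcomp Require Import all_boot all_order all_algebra.
From mathcomp Require Import finmap.
Set Implicit Arguments. Unset Strict Implicit. Unset Printing Implicit Defensive.
Import Order.TTheory GRing.Theory Num.Theory.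
Local Open Scope fset_scope.

(* Moebius function on positive integers (value at 0 is irrelevant; set to 0):
   mu n = (-1)^k if n is a product of k distinct primes, 0 otherwise. *)
Definition moebius (n : nat) : int :=
  if n == 0%N then 0%R
  else if all (fun p => logn p n == 1%N) (primes n)
       then ((-1) ^+ size (primes n))%R else 0%R.

Definition supB (B : {fset nat}) : nat := \max_(b <- B) b.

Definition vmult (B : {fset nat}) (d : nat) : nat := #|` [fset b in B | d %| b] |.

Definition pairwise_coprime (B : {fset nat}) : bool :=
  all (fun a => all (fun b => (a == b) || coprime a b) B) B.

Definition mu_sum (B : {fset nat}) : int :=
  (\sum_(1 <= d < (supB B).+1)
     moebius d * (vmult B d)%:Z * ((vmult B d)%:Z - 1))%R.

(* Main.v *)
Require Import Defs.
From HB Require Import structures.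
From mathcomp Require Import all_boot all_order all_algebra finmap.
Import Order.TTheory GRing.Theory Num.Theory.
Local Open Scope fset_scope.

Lemma moeb1 : moebius 1 = 1%R.
Proof. by []. Qed.

Lemma moeb_sq p d : prime p -> (0 < d)%N -> p * p %| d -> moebius d = 0%R.
Proof.
move=> pp d0 hd; rewrite /moebius gtn_eqF //=.
have pin : p \in primes d by rewrite mem_primes pp d0 (dvdn_trans (dvdn_mulr p (dvdnn p)) hd).
have : (2 <= logn p d)%N by rewrite -pfactor_dvdn // expnS expn1.
by case: allP => // /(_ _ pin) /eqP ->.
Qed.

Lemma moeb_p p d : prime p -> (0 < d)%N -> ~~ (p %| d) -> moebius (p * d) = (- moebius d)%R.
Proof.
move=> pp d0 nd; have p0 := prime_gt0 pp.
have pd0 : (0 < p * d)%N by rewrite muln_gt0 p0.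
have hmem : primes (p * d) =i p :: primes d.
  by move=> q; rewrite primesM // primes_prime // !inE.
have pnd : p \notin primes d by rewrite mem_primes (negbTE nd) !andbF.
have hperm : perm_eq (primes (p * d)) (p :: primes d).
  by apply: uniq_perm; rewrite ?primes_uniq //= pnd primes_uniq.
rewrite /moebius !gtn_eqF // (perm_all _ hperm) (perm_size hperm) /=.
rewrite lognM // logn_prime // eqxx (logn_coprime (m:=d)) ?prime_coprime // addn0 /=.
rewrite (@eq_in_all _ _ (fun q => logn q d == 1%N)); last first.
  move=> q qin; rewrite lognM // logn_prime //.
  have : q != p by apply: contraNneq pnd => <-.
  by rewrite eq_sym => /negbTE ->.
by case: all => //; rewrite exprS mulN1r.
Qed.

Lemma moeb_sum g : (0 < g)%N ->
  (\sum_(d <- divisors g) moebius d)%R = ((g == 1)%N)%:R%R.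
Proof.
move=> g0; case: (ltngtP g 1) => [|hg|->]; first by rewrite ltnS leqn0 => /eqP g00; rewrite g00 in g0.
  2: by rewrite (_ : divisors 1 = [:: 1]) // big_seq1.
have pp := pdiv_prime hg; set p := pdiv g in pp *.
have pg : p %| g := pdiv_dvd g.
have p0 := prime_gt0 pp.
have dpos d : d \in divisors g -> (0 < d)%N.
  by rewrite -dvdn_divisors // => /dvdn_gt0; apply.
rewrite (bigID (fun d => p %| d)) /= (bigID (fun d => p * p %| d)) /=.
rewrite big1_seq ?add0r; last first.
  by move=> d /andP [/andP [_ h] din]; exact: (@moeb_sq p d pp (dpos d din) h).
rewrite -(big_filter _ (fun i => (p %| i) && ~~ (p * p %| i))) -(big_filter _ (fun i => ~~ (p %| i))).
set s1 := filter _ _; set s2 := filter _ _.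
have hperm : perm_eq s1 [seq p * e | e <- s2].
  apply: uniq_perm.
  - by rewrite filter_uniq // divisors_uniq.
  - rewrite map_inj_uniq ?filter_uniq ?divisors_uniq //.
    by move=> x y /(congr1 (fun z => z %/ p)); rewrite !mulKn.
  move=> x; rewrite mem_filter; apply/idP/mapP.
  - case/andP => /andP [/dvdnP [e ->] hn] xin.
    rewrite [e * p]mulnC in hn xin *; exists e => //.
    rewrite mem_filter -!dvdn_divisors // in xin *.
    rewrite (dvdn_trans (dvdn_mull p (dvdnn e)) xin) andbT.
    by apply: contra hn => h; rewrite dvdn_pmul2l.
  - case=> e; rewrite mem_filter => /andP [he ein] ->.
    rewrite -!dvdn_divisors // in ein *.
    rewrite dvdn_mulr // dvdn_pmul2l // he /=.
    by rewrite Gauss_dvd ?prime_coprime // pg ein.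
rewrite (perm_big _ hperm) big_map.
rewrite (eq_big_seq (fun e => - moebius e)%R).
  by rewrite sumrN addNr.
move=> e; rewrite mem_filter => /andP [he ein].
by rewrite moeb_p // dpos.
Qed.

Lemma range_div g N (F : nat -> int) : (0 < g)%N -> (g < N)%N ->
  (\sum_(1 <= d < N) (if (d %| g)%N then F d else 0) = \sum_(d <- divisors g) F d)%R.
Proof.
move=> g0 gN; rewrite -big_mkcond -big_filter; apply: perm_big.
apply: uniq_perm; rewrite ?filter_uniq ?iota_uniq ?divisors_uniq //.
move=> d; rewrite mem_filter mem_index_iota -dvdn_divisors //.
case hd: (d %| g) => //=.
by rewrite (dvdn_gt0 g0 hd) (leq_ltn_trans (dvdn_leq g0 hd) gN).
Qed.

Lemma vmultE (B : {fset nat}) d : vmult B d = \sum_(a <- B) (d %| a).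
Proof.
rewrite /vmult.
have -> : [fset b in B | d %| b] = [fset b in [seq b <- B | d %| b]].
  by apply/fsetP => x; rewrite !inE mem_filter andbC.
rewrite card_fseq undup_id ?filter_uniq ?fset_uniq //.
rewrite size_filter -sum1_count big_mkcond /=.
by apply: eq_bigr => a _; case: (d %| a).
Qed.

Lemma pairs_count (B : {fset nat}) (P : pred nat) :
  let c := \sum_(a <- B) (P a : nat) in
  c * c - c = \sum_(a <- B) \sum_(b <- B) ((a != b) && P a && P b : nat).
Proof.
move=> c.
have -> : c * c = (\sum_(a <- B) \sum_(b <- B) ((a != b) && P a && P b : nat) + c)%N.
  rewrite /c big_distrl -big_split /=; apply: eq_big_seq => a ain.
  rewrite big_distrr /=.
  transitivity (\sum_(b <- B) (((a != b) && P a && P b : nat) + (if b == a then P a : nat else 0))).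
    apply: eq_bigr => b _.
    by case: (eqVneq b a) => [->|hab]; rewrite ?eqxx /=; case: (P a); case: (P b).
  by rewrite big_split /= -[X in (_ + X)%N]big_mkcond (@fbig_pred1_inj _ _ _ _ _ (fun=> P a : nat) id B a ain (@inj_id _)).
exact: addnK.
Qed.

From mathcomp Require Import zify ring lra.

Lemma mu_sumE (B : {fset nat}) : (forall a, a \in B -> (0 < a)%N) ->
  mu_sum B = Posz (\sum_(a <- B) \sum_(b <- B) ((a != b) && coprime a b : nat) : nat).
Proof.
move=> Bpos; rewrite /mu_sum.
have hv d : ((vmult B d)%:Z * ((vmult B d)%:Z - 1))%R =
   (\sum_(a <- B) \sum_(b <- B) ((a != b) && (d %| a) && (d %| b) : nat))%:R%R.
  rewrite -pairs_count vmultE natz; set c := \sum_(a <- B) _.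
  case: c => [|c'] //=. rewrite -addn1 PoszD addrK; lia.
rewrite (eq_bigr (fun d => \sum_(a <- B) (moebius d * (\sum_(b <- B) ((a != b) && (d %| a) && (d %| b) : nat))%:R))%R); last first.
  by move=> d _; rewrite -mulrA hv natr_sum mulr_sumr.
rewrite exchange_big -natz natr_sum /=; apply: eq_big_seq => a ain.
under eq_bigr => d _ do rewrite natr_sum mulr_sumr.
rewrite exchange_big natr_sum /=; apply: eq_big_seq => b bin.
case: (eqVneq a b) => [<-|hab] /=.
  by rewrite big1 // => d _; rewrite mulr0.
have g0 : (0 < gcdn a b)%N by rewrite gcdn_gt0 Bpos.
rewrite (eq_bigr (fun d => if (d %| gcdn a b)%N then moebius d else 0%R)); last first.
  by move=> d _; rewrite dvdn_gcd; case: (_ && _); rewrite ?mulr1 ?mulr0.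
rewrite range_div // ?moeb_sum //.
rewrite ltnS (leq_trans (dvdn_leq (Bpos a ain) (dvdn_gcdl a b))) //.
exact: (@leq_bigmax_seq _ _ xpredT id a ain).
Qed.

Lemma key (R : rcfType) (B : {fset nat}) : B != fset0 ->
  (forall a, a \in B -> (0 < a)%N) ->
  pairwise_coprime B =
  ((2 * (#|` B |)%:R - 1 : R) == Num.sqrt (1 + 4 * (mu_sum B)%:~R))%R.
Proof.
move=> B0 Bpos; rewrite mu_sumE //.
set T := \sum_(a <- B) _.
set n := #|` B |.
set U := \sum_(a <- B) \sum_(b <- B) ((a != b) && ~~ coprime a b : nat).
have hW : (n * n - n)%N = (T + U)%N.
  have := pairs_count B xpredT; rewrite /= -/n.
  have -> : \sum_(a <- B) (true : nat) = n by rewrite sum1_size.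
  move=> ->; rewrite /T /U -big_split; apply: eq_bigr => a _.
  rewrite -big_split; apply: eq_bigr => b _ /=.
  by case: (a != b); case: (coprime a b).
have hPU : pairwise_coprime B = (U == 0%N).
  rewrite /U sum_nat_seq_eq0 /pairwise_coprime; apply: eq_all => a /=.
  rewrite sum_nat_seq_eq0; apply: eq_all => b /=.
  by case: (a == b); case: (coprime a b).
have n1 : (1 <= n)%N.
  rewrite lt0n; apply: contra B0 => /eqP h; apply/eqP/fsetP => x.
  by rewrite inE; apply/negP => xin; move: h; rewrite /n (perm_size (perm_to_rem xin)).
have nn : (n <= n * n)%N by rewrite leq_pmulr.
have -> : (((Posz T)%:~R)%R : R) = (T%:R)%R by [].
have hPT : pairwise_coprime B = (T == n * n - n)%N.
  by rewrite hPU hW; apply/eqP/eqP; lia.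
Local Open Scope ring_scope.
rewrite hPT; set x : R := n%:R.
have x1 : (1 <= x)%R by rewrite /x ler1n.
apply/eqP/eqP => [hT|].
  have -> : (T%:R : R) = x * x - x by rewrite hT natrB // natrM.
  have -> : (1 + 4 * (x * x - x) : R) = (2 * x - 1) ^+ 2 by ring.
  by rewrite sqrtr_sqr ger0_norm //; lra.
move=> h.
have h2 : ((2 * x - 1) ^+ 2 : R) = 1 + 4 * T%:R.
  by rewrite h sqr_sqrtr // addr_ge0 // mulr_ge0.
apply/eqP; rewrite -(eqr_nat R) natrB // natrM -/x; apply/eqP.
have : (4 * (T%:R - (x * x - x)) : R) = 0 by rewrite -[LHS]subr0 -(subrr ((2 * x - 1) ^+ 2)) {1}h2; ring.
by move/eqP; rewrite mulf_eq0 pnatr_eq0 /= subr_eq0 => /eqP.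
Qed.

Theorem corollary5p6 (R : rcfType) (A : {fset nat})
  (hA0 : A != fset0) (hApos : forall a, a \in A -> (0 < a)%N) :
  #|` [fset B in fpowerset A | (B != fset0) && pairwise_coprime B] |
  = #|` [fset B in fpowerset A |
          (B != fset0) &&
          ((2 * (#|` B |)%:R - 1 : R) ==
             Num.sqrt (1 + 4 * (mu_sum B)%:~R))%R] |.
Proof.
congr (size (enum_fset _)); apply/fsetP => B; rewrite !inE.
case Bin: (B \in fpowerset A) => //=.
case B0: (B != fset0) => //=.
apply: key => // a aB; apply: hApos.
by move: Bin; rewrite fpowersetE => /fsubsetP; apply.
Qed.
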